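(* Let $(G_n)$ be a sequence of finite connected graphs, $G_n$ having $n$ vertices, all satisfying (bal) with a fixed parameter $D$. Let $(r_n)$ and $(t_n)$ be sequences of positive integers such that $r_n/(\log(n)\, t_{\mathrm{mix}}(G_n))\to\infty$ and $t_n/r_n\to1$. Then there is $n_0$ such that for all $n\ge n_0$, every vertex $u$ of $G_n$ and every nonempty vertex set $U$ of $G_n$, $$\Pr_u(\tau_U<t_n)\ge \tfrac13\,\mathrm{Cap}_{r_n}(U).$$
   Context: For a finite connected graph $G=(V,E)$, $d(v)$ is the degree of $v$ and $\delta(G),\Delta(G)$ the minimum and maximum degrees; (bal) with parameter $D$ means $\Delta(G)/\delta(G)\le D$. The lazy random walk $(X_t)$ on $G$ at each step stays put with probability $1/2$ and otherwise moves along a uniformly chosen incident edge; $\Pr_\mu$ denotes its law with $X_0\sim\mu$ ($\Pr_u$ if $X_0=u$). $\pi(v)=d(v)/(2|E|)$ and $\mathbf p^t(u,v)=\Pr_u(X_t=v)$. The uniform mixing time is $t_{\mathrm{mix}}(G)=\min\{t\ge0:\max_{u,v}|\mathbf p^t(u,v)/\pi(v)-1|\le1/2\}$. For nonempty $U\subseteq V$, $\tau_U=\min\{t\ge0:X_t\in U\}$ and for an integer $r\ge 0$, $\mathrm{Cap}_r(U)=\Pr_\pi(\tau_U<r)$. *)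

(* Defs.v *)
From Stdlib Require Import Reals Lra Lia List Relations.
Open Scope R_scope.

(* A graph on n vertices {0,...,n-1} is given by an adjacency test
   adj : nat -> nat -> bool (only entries x,y < n matter). *)

Definition simple_graph (n : nat) (adj : nat -> nat -> bool) : Prop :=
  (forall x y, (x < n)%nat -> (y < n)%nat -> adj x y = adj y x) /\
  (forall x, (x < n)%nat -> adj x x = false).

Definition connected (n : nat) (adj : nat -> nat -> bool) : Prop :=
  forall u v, (u < n)%nat -> (v < n)%nat ->
    clos_refl_trans nat (fun x y => (x < n)%nat /\ (y < n)%nat /\ adj x y = true) u v.

Fixpoint nsum (k : nat) (f : nat -> nat) : nat :=
  match k with O => O | S k' => (nsum k' f + f k')%nat end.

Fixpoint fsum (k : nat) (f : nat -> R) : R :=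
  match k with O => 0 | S k' => fsum k' f + f k' end.

Definition deg (n : nat) (adj : nat -> nat -> bool) (v : nat) : nat :=
  nsum n (fun w => if adj v w then 1%nat else 0%nat).

Definition nedges (n : nat) (adj : nat -> nat -> bool) : nat :=
  nsum n (fun y => nsum y (fun x => if adj x y then 1%nat else 0%nat)).

Fixpoint fmaxS (k : nat) (f : nat -> nat) : nat :=
  match k with O => f O | S k' => Nat.max (fmaxS k' f) (f k) end.
Fixpoint fminS (k : nat) (f : nat -> nat) : nat :=
  match k with O => f O | S k' => Nat.min (fminS k' f) (f k) end.

Definition maxdeg (n : nat) (adj : nat -> nat -> bool) : nat :=
  fmaxS (n - 1) (deg n adj).
Definition mindeg (n : nat) (adj : nat -> nat -> bool) : nat :=
  fminS (n - 1) (deg n adj).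

Definition balanced (n : nat) (adj : nat -> nat -> bool) (D : R) : Prop :=
  INR (maxdeg n adj) / INR (mindeg n adj) <= D.

Definition trans (n : nat) (adj : nat -> nat -> bool) (w v : nat) : R :=
  (if Nat.eqb w v then / 2 else 0) +
  (if adj w v then / 2 * / INR (deg n adj w) else 0).

(* probability of the trajectory u, x1, ..., xk (l = [x1;...;xk]) *)
Fixpoint weight (n : nat) (adj : nat -> nat -> bool) (u : nat) (l : list nat) : R :=
  match l with
  | nil => 1
  | x :: l' => trans n adj u x * weight n adj x l'
  end.

(* sum of F over all lists of length k with entries in {0..n-1} *)
Fixpoint pathsum (n k : nat) (F : list nat -> R) : R :=
  match k with
  | O => F nil
  | S k' => fsum n (fun x => pathsum n k' (fun l => F (x :: l)))
  end.

(* p^t(u,v) = Pr_u(X_t = v) *)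
Definition pt (n : nat) (adj : nat -> nat -> bool) (t u v : nat) : R :=
  pathsum n t (fun l => weight n adj u l * (if Nat.eqb (last l u) v then 1 else 0)).

Definition pi (n : nat) (adj : nat -> nat -> bool) (v : nat) : R :=
  INR (deg n adj v) / INR (2 * nedges n adj).

Definition mix_ok (n : nat) (adj : nat -> nat -> bool) (t : nat) : Prop :=
  forall u v, (u < n)%nat -> (v < n)%nat ->
    Rabs (pt n adj t u v / pi n adj v - 1) <= / 2.

Definition is_tmix (n : nat) (adj : nat -> nat -> bool) (t : nat) : Prop :=
  mix_ok n adj t /\ forall s, (s < t)%nat -> ~ mix_ok n adj s.

(* Pr_u(tau_U < t): probability that one of X_0,...,X_{t-1} lies in U *)
Definition hit_prob (n : nat) (adj : nat -> nat -> bool) (U : nat -> bool)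
  (u t : nat) : R :=
  match t with
  | O => 0
  | S k => pathsum n k (fun l => weight n adj u l *
                           (if existsb U (u :: l) then 1 else 0))
  end.

(* Cap_r(U) = Pr_pi(tau_U < r) *)
Definition cap (n : nat) (adj : nat -> nat -> bool) (U : nat -> bool) (r : nat) : R :=
  fsum n (fun v => pi n adj v * hit_prob n adj U v r).

(* Main.v *)
Require Import Defs.
From Stdlib Require Import Reals Lra Lia List Relations.
Open Scope R_scope.

Lemma fsum_ext_lt k f g : (forall i, (i<k)%nat -> f i = g i) -> fsum k f = fsum k g.
Proof. induction k; intros H; simpl; auto. rewrite IHk by (intros; apply H; lia). rewrite H by lia. reflexivity. Qed.

Lemma fsum_le_lt k f g : (forall i, (i<k)%nat -> f i <= g i) -> fsum k f <= fsum k g.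
Proof. induction k; intros H; simpl; [lra|]. apply Rplus_le_compat; [apply IHk; intros; apply H; lia| apply H; lia]. Qed.

Lemma fsum_plus k f g : fsum k (fun i => f i + g i) = fsum k f + fsum k g.
Proof. induction k; simpl; [lra|]. rewrite IHk; ring. Qed.

Lemma fsum_minus k f g : fsum k (fun i => f i - g i) = fsum k f - fsum k g.
Proof. induction k; simpl; [lra|]. rewrite IHk; ring. Qed.

Lemma fsum_scal k c f : fsum k (fun i => c * f i) = c * fsum k f.
Proof. induction k; simpl; [lra|]. rewrite IHk; ring. Qed.

Lemma fsum_zero k : fsum k (fun _ => 0) = 0.
Proof. induction k; simpl; [lra|]. rewrite IHk; ring. Qed.

Lemma fsum_nonneg k f : (forall i, (i<k)%nat -> 0 <= f i) -> 0 <= fsum k f.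
Proof. intros H. rewrite <- (fsum_zero k). apply fsum_le_lt. auto. Qed.

Lemma fsum_swap a b f : fsum a (fun i => fsum b (fun j => f i j)) = fsum b (fun j => fsum a (fun i => f i j)).
Proof. induction a; simpl. rewrite fsum_zero; reflexivity.
rewrite IHa. rewrite <- fsum_plus. reflexivity. Qed.

Lemma fsum_delta k u f : (u<k)%nat -> fsum k (fun i => (if Nat.eqb i u then 1 else 0) * f i) = f u.
Proof. induction k; intros H; [lia|]. simpl. destruct (Nat.eqb k u) eqn:E.
- apply Nat.eqb_eq in E; subst. rewrite (fsum_ext_lt _ _ (fun _ => 0)). rewrite fsum_zero; ring.
  intros i Hi. destruct (Nat.eqb i u) eqn:E2; [apply Nat.eqb_eq in E2; lia| ring].
- apply Nat.eqb_neq in E. rewrite IHk by lia. ring. Qed.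

Lemma INR_nsum k f : INR (nsum k f) = fsum k (fun i => INR (f i)).
Proof. induction k; simpl; [reflexivity|]. rewrite plus_INR, IHk. reflexivity. Qed.

Lemma pathsum_ext n k F G : (forall l, F l = G l) -> pathsum n k F = pathsum n k G.
Proof. revert F G; induction k; intros F G H; simpl; auto. apply fsum_ext_lt; intros; apply IHk; intros; apply H. Qed.

Lemma pathsum_scal n k c F : pathsum n k (fun l => c * F l) = c * pathsum n k F.
Proof. revert F; induction k; intros F; simpl; auto. rewrite <- fsum_scal. apply fsum_ext_lt; intros.
exact (IHk (fun l => F (i::l))). Qed.

Lemma inv_INR_nonneg d : 0 <= / INR d.
Proof. destruct d. simpl. rewrite Rinv_0; lra. apply Rlt_le, Rinv_0_lt_compat, lt_0_INR; lia. Qed.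

Lemma trans_nonneg n adj w v : 0 <= trans n adj w v.
Proof. unfold trans. pose proof (inv_INR_nonneg (deg n adj w)).
destruct (Nat.eqb w v); destruct (adj w v); nra. Qed.

Lemma last_cons_d (x : nat) l d : last (x::l) d = last l x.
Proof. revert x d; induction l; intros x d; [reflexivity|]. change (last (a::l) d = last (a::l) x). rewrite !IHl. reflexivity. Qed.

Definition rowsum1 n adj := forall v, (v<n)%nat -> fsum n (trans n adj v) = 1.

Lemma mass n adj k u : rowsum1 n adj -> (u<n)%nat -> pathsum n k (weight n adj u) = 1.
Proof. intros HR; revert u; induction k; intros u Hu; simpl; auto.
transitivity (fsum n (trans n adj u)); [|apply HR; auto]. apply fsum_ext_lt; intros x Hx.
rewrite pathsum_scal. change (pathsum n k (fun l => weight n adj x l)) with (pathsum n k (weight n adj x)).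
rewrite IHk by auto. ring. Qed.

Lemma H_rec n adj U u k : rowsum1 n adj -> (u<n)%nat ->
  hit_prob n adj U u (S k) = if U u then 1 else fsum n (fun x => trans n adj u x * hit_prob n adj U x k).
Proof. intros HR Hu. destruct k.
- simpl. destruct (U u); simpl. ring. rewrite (fsum_ext_lt _ _ (fun _ => 0)). rewrite fsum_zero; ring. intros; ring.
- unfold hit_prob. cbn [pathsum]. destruct (U u) eqn:EU.
  + transitivity (fsum n (trans n adj u)); [|apply HR; auto]. apply fsum_ext_lt; intros x Hx.
    rewrite (pathsum_ext _ _ _ (fun l => trans n adj u x * weight n adj x l)).
    rewrite pathsum_scal. change (pathsum n k (fun l => weight n adj x l)) with (pathsum n k (weight n adj x)).
    rewrite mass by auto. ring.
    intros l. simpl. rewrite EU. simpl. ring.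
  + apply fsum_ext_lt; intros x Hx. rewrite <- pathsum_scal. apply pathsum_ext; intros l.
    simpl. rewrite EU. simpl. ring. Qed.

Lemma pt0 n adj u v : pt n adj 0 u v = if Nat.eqb v u then 1 else 0.
Proof. unfold pt; simpl. rewrite Nat.eqb_sym. destruct (Nat.eqb v u); ring. Qed.

Lemma ptS n adj s u v : pt n adj (S s) u v = fsum n (fun x => trans n adj u x * pt n adj s x v).
Proof. unfold pt. cbn [pathsum]. apply fsum_ext_lt; intros x Hx. rewrite <- pathsum_scal.
apply pathsum_ext; intros l. rewrite last_cons_d. simpl. ring. Qed.

Lemma rowsum_ok n adj : (forall v, (v<n)%nat -> (0 < deg n adj v)%nat) -> rowsum1 n adj.
Proof. intros hd v Hv.
assert (Hd: INR (deg n adj v) <> 0) by (apply not_0_INR; specialize (hd v Hv); lia).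
rewrite (fsum_ext_lt _ _ (fun x => (if Nat.eqb x v then 1 else 0) * (/2) + (/2 * / INR (deg n adj v)) * INR (if adj v x then 1%nat else 0%nat))).
rewrite fsum_plus, fsum_delta by auto. rewrite fsum_scal. rewrite <- INR_nsum. fold (deg n adj v). field. auto.
intros x Hx. unfold trans. rewrite Nat.eqb_sym. destruct (Nat.eqb x v); destruct (adj v x); simpl; ring. Qed.

Lemma stationary n adj x : (forall v, (v<n)%nat -> (0 < deg n adj v)%nat) ->
  (forall a b, (a<n)%nat -> (b<n)%nat -> adj a b = adj b a) -> (x<n)%nat ->
  fsum n (fun v => INR (deg n adj v) * trans n adj v x) = INR (deg n adj x).
Proof. intros hd hs Hx.
rewrite (fsum_ext_lt _ _ (fun v => (if Nat.eqb v x then 1 else 0) * (INR (deg n adj x) * /2) + /2 * INR (if adj x v then 1%nat else 0%nat))).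
rewrite fsum_plus, fsum_delta by auto. rewrite fsum_scal. rewrite <- INR_nsum. fold (deg n adj x). field.
intros v Hv. assert (Hd: INR (deg n adj v) <> 0) by (apply not_0_INR; specialize (hd v Hv); lia).
unfold trans. rewrite (hs v x Hv Hx). destruct (Nat.eqb v x) eqn:E.
- apply Nat.eqb_eq in E; subst. destruct (adj x x); simpl; field; auto.
- destruct (adj x v); simpl; field; auto. Qed.

Lemma pi_nonneg n adj v : 0 <= pi n adj v.
Proof. unfold pi, Rdiv. apply Rmult_le_pos. apply pos_INR. apply inv_INR_nonneg. Qed.

Lemma stationary_pi n adj x : (forall v, (v<n)%nat -> (0 < deg n adj v)%nat) ->
  (forall a b, (a<n)%nat -> (b<n)%nat -> adj a b = adj b a) -> (x<n)%nat ->
  fsum n (fun v => pi n adj v * trans n adj v x) = pi n adj x.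
Proof. intros hd hs Hx. unfold pi, Rdiv.
rewrite (fsum_ext_lt _ _ (fun v => / INR (2 * nedges n adj) * (INR (deg n adj v) * trans n adj v x))).
rewrite fsum_scal, stationary by auto. ring. intros; ring. Qed.

Section H.
Variables (n : nat) (adj : nat -> nat -> bool) (U : nat -> bool).
Hypothesis HR : rowsum1 n adj.
Notation H := (fun k u => hit_prob n adj U u k).
Notation P := (trans n adj).

Lemma H_bounds k : forall u, (u<n)%nat -> 0 <= H k u <= 1.
Proof. induction k; intros u Hu. simpl; lra.
cbv beta. rewrite H_rec by auto. destruct (U u). lra. split.
- apply fsum_nonneg; intros x Hx. apply Rmult_le_pos. apply trans_nonneg. apply IHk; auto.
- rewrite <- (HR u Hu). apply fsum_le_lt; intros x Hx. pose proof (trans_nonneg n adj u x).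
  pose proof (IHk x Hx). nra. Qed.

Lemma H_ge k u : (u<n)%nat -> fsum n (fun x => P u x * H k x) <= H (S k) u.
Proof. intros Hu. cbv beta. rewrite H_rec by auto. destruct (U u); [|lra].
rewrite <- (HR u Hu). apply fsum_le_lt; intros x Hx. pose proof (trans_nonneg n adj u x).
  pose proof (H_bounds k x Hx). cbv beta in *. nra. Qed.

Lemma H_mono k : forall u, (u<n)%nat -> H k u <= H (S k) u.
Proof. induction k; intros u Hu. cbv beta. apply (H_bounds 1). auto.
cbv beta. rewrite !H_rec by auto. destruct (U u). lra.
apply fsum_le_lt; intros x Hx. pose proof (trans_nonneg n adj u x). specialize (IHk x Hx). cbv beta in IHk. nra. Qed.

Lemma H_mono_le k m u : (u<n)%nat -> (k <= m)%nat -> H k u <= H m u.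
Proof. intros Hu Hkm. induction Hkm. lra. eapply Rle_trans; [apply IHHkm| apply H_mono; auto]. Qed.

Lemma markov s m : forall u, (u<n)%nat ->
  fsum n (fun v => pt n adj s u v * H m v) <= H (s + m)%nat u.
Proof. induction s; intros u Hu.
- simpl. rewrite (fsum_ext_lt _ _ (fun v => (if Nat.eqb v u then 1 else 0) * H m v)).
  rewrite fsum_delta by auto. simpl; lra. intros; rewrite pt0; reflexivity.
- eapply Rle_trans; [|apply (H_ge (s+m) u Hu)].
  rewrite (fsum_ext_lt _ _ (fun v => fsum n (fun x => P u x * (pt n adj s x v * H m v)))).
  rewrite fsum_swap. apply fsum_le_lt; intros x Hx. rewrite fsum_scal.
  apply Rmult_le_compat_l. apply trans_nonneg. apply IHs; auto.
  intros v Hv. rewrite ptS. rewrite Rmult_comm, <- fsum_scal. apply fsum_ext_lt; intros; ring. Qed.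

End H.

Lemma cap_diff n adj U a b : cap n adj U a - cap n adj U b =
  fsum n (fun v => pi n adj v * (hit_prob n adj U v a - hit_prob n adj U v b)).
Proof. unfold cap. rewrite <- fsum_minus. apply fsum_ext_lt; intros; ring. Qed.

Lemma cap_concave n adj U k : (forall v, (v<n)%nat -> (0 < deg n adj v)%nat) ->
  (forall a b, (a<n)%nat -> (b<n)%nat -> adj a b = adj b a) ->
  cap n adj U (S (S k)) - cap n adj U (S k) <= cap n adj U (S k) - cap n adj U k.
Proof. intros hd hs. pose proof (rowsum_ok n adj hd) as HR.
rewrite !cap_diff.
set (g := fun x => hit_prob n adj U x (S k) - hit_prob n adj U x k).
apply Rle_trans with (fsum n (fun v => pi n adj v * fsum n (fun x => trans n adj v x * g x))).
- apply fsum_le_lt; intros v Hv. apply Rmult_le_compat_l. apply pi_nonneg.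
  rewrite (H_rec n adj U v (S k)), (H_rec n adj U v k) by auto. destruct (U v).
  + replace (1-1) with 0 by ring. apply fsum_nonneg; intros x Hx. apply Rmult_le_pos. apply trans_nonneg.
    unfold g. pose proof (H_mono n adj U HR k x Hx). cbv beta in *. lra.
  + rewrite <- fsum_minus. apply fsum_le_lt; intros x Hx. unfold g. lra.
- rewrite (fsum_ext_lt _ _ (fun v => fsum n (fun x => pi n adj v * trans n adj v x * g x))).
  rewrite fsum_swap. apply fsum_le_lt; intros x Hx.
  rewrite (fsum_ext_lt _ _ (fun v => g x * (pi n adj v * trans n adj v x))) by (intros; ring).
  rewrite fsum_scal, stationary_pi by auto. unfold g. lra.
  intros v Hv. rewrite <- fsum_scal. apply fsum_ext_lt; intros; ring. Qed.

Lemma concave_ratio (a : nat -> R) : a 0%nat = 0 ->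
  (forall k, a (S (S k)) - a (S k) <= a (S k) - a k) ->
  forall m d, INR m * a (m + d)%nat <= INR (m + d) * a m.
Proof. intros H0 Hc.
assert (S1: forall k, INR k * (a (S k) - a k) <= a k).
{ induction k. simpl; lra. rewrite S_INR. specialize (Hc k). pose proof (pos_INR k). assert (0 <= INR k + 1) by lra. pose proof (Rmult_le_compat_l _ _ _ H1 Hc). lra. }
assert (S2: forall k, INR k * a (S k) <= INR (S k) * a k).
{ intros k. rewrite S_INR. specialize (S1 k). lra. }
intros m d. induction d. rewrite Nat.add_0_r; lra.
rewrite Nat.add_succ_r. set (r := (m + d)%nat) in *.
destruct (Nat.eq_dec r 0) as [E|E].
- assert (m = 0%nat) by lia. subst m. rewrite H0. simpl INR. lra.
- pose proof (S2 r). assert (0 < INR r) by (apply lt_0_INR; lia).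
  pose proof (pos_INR m). rewrite S_INR in *.
  apply Rmult_le_reg_l with (INR r); auto.
  apply Rle_trans with (INR m * ((INR r + 1) * a r)). nra. nra. Qed.

Lemma mix_facts n adj s : mix_ok n adj s ->
  (forall v, (v<n)%nat -> 0 < pi n adj v) /\
  (forall u v, (u<n)%nat -> (v<n)%nat -> pi n adj v / 2 <= pt n adj s u v).
Proof. intros Hm.
assert (Hp: forall v, (v<n)%nat -> 0 < pi n adj v).
{ intros v Hv. destruct (Rle_lt_or_eq_dec _ _ (pi_nonneg n adj v)) as [h|h]; auto.
  exfalso. specialize (Hm v v Hv Hv). rewrite <- h in Hm. unfold Rdiv in Hm. rewrite Rinv_0 in Hm.
  rewrite Rmult_0_r in Hm. unfold Rabs in Hm. destruct (Rcase_abs _) in Hm; lra. }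
split; auto. intros u v Hu Hv. specialize (Hm u v Hu Hv). specialize (Hp v Hv).
assert (pt n adj s u v / pi n adj v - 1 >= - / 2).
{ unfold Rabs in Hm. destruct (Rcase_abs _); lra. }
assert (pt n adj s u v = (pt n adj s u v / pi n adj v) * pi n adj v) by (field; lra).
nra. Qed.

Lemma deg_pos n adj : (forall v, (v<n)%nat -> 0 < pi n adj v) -> forall v, (v<n)%nat -> (0 < deg n adj v)%nat.
Proof. intros Hp v Hv. specialize (Hp v Hv). unfold pi in Hp. destruct (deg n adj v); [|lia].
simpl in Hp. unfold Rdiv in Hp. rewrite Rmult_0_l in Hp. lra. Qed.

Lemma cap_nonneg n adj U k : rowsum1 n adj -> 0 <= cap n adj U k.
Proof. intros HR. unfold cap. apply fsum_nonneg; intros v Hv. apply Rmult_le_pos. apply pi_nonneg.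
apply (H_bounds n adj U HR k v Hv). Qed.

Lemma cap_mono n adj U a b : rowsum1 n adj -> (a <= b)%nat -> cap n adj U a <= cap n adj U b.
Proof. intros HR Hab. assert (0 <= cap n adj U b - cap n adj U a); [|lra].
rewrite cap_diff. apply fsum_nonneg; intros v Hv. apply Rmult_le_pos. apply pi_nonneg.
pose proof (H_mono_le n adj U HR a b v Hv Hab). cbv beta in *. lra. Qed.

Lemma core n adj U s t r u :
  (forall a b, (a<n)%nat -> (b<n)%nat -> adj a b = adj b a) -> mix_ok n adj s ->
  (0 < r)%nat -> (2*r + 3*s <= 3*t)%nat -> (u<n)%nat ->
  hit_prob n adj U u t >= / 3 * cap n adj U r.
Proof. intros hs Hm Hr Hts Hu.
destruct (mix_facts n adj s Hm) as [Hp Hpt].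
pose proof (deg_pos n adj Hp) as hd. pose proof (rowsum_ok n adj hd) as HR.
set (m := (t - s)%nat). replace t with (s + m)%nat by (unfold m; lia).
assert (K: cap n adj U m / 2 <= hit_prob n adj U u (s+m)).
{ eapply Rle_trans; [|apply (markov n adj U HR s m u Hu)].
  unfold cap, Rdiv. rewrite Rmult_comm, <- fsum_scal. apply fsum_le_lt; intros v Hv.
  pose proof (Hpt u v Hu Hv). pose proof (H_bounds n adj U HR m v Hv). cbv beta in *. nra. }
pose proof (cap_nonneg n adj U r HR).
destruct (Compare_dec.le_lt_dec r m) as [Hrm|Hrm].
- pose proof (cap_mono n adj U r m HR Hrm). lra.
- pose proof (concave_ratio (cap n adj U)) as CR.
  assert (cap n adj U 0 = 0) by (unfold cap; simpl; rewrite (fsum_ext_lt _ _ (fun _ => 0)) by (intros; ring); apply fsum_zero).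
  specialize (CR H0 (fun k => cap_concave n adj U k hd hs) m (r - m)%nat).
  replace (m + (r - m))%nat with r in CR by lia.
  assert (3 * INR m >= 2 * INR r).
  { replace 3 with (INR 3) by (simpl; ring). replace 2 with (INR 2) by (simpl; ring).
    rewrite <- !mult_INR. apply Rle_ge, le_INR. unfold m. lia. }
  assert (0 < INR r) by (apply lt_0_INR; lia).
  assert (HH: INR r * (2/3 * cap n adj U r) <= INR r * cap n adj U m) by nra.
  apply Rmult_le_reg_l in HH; auto. lra. Qed.

Theorem mainTheorem4
  (G : nat -> nat -> nat -> bool) (D : R)
  (tm : nat -> nat) (r t : nat -> nat)
  (HG : forall n, (2 <= n)%nat ->
     simple_graph n (G n) /\ connected n (G n) /\ balanced n (G n) D)
  (Htm : forall n, (2 <= n)%nat -> is_tmix n (G n) (tm n))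
  (Hr : forall n, (0 < r n)%nat)
  (Ht : forall n, (0 < t n)%nat)
  (Hrlim : forall M : R, exists N : nat, forall n, (N <= n)%nat ->
     INR (r n) / (ln (INR n) * INR (tm n)) > M)
  (Htlim : Un_cv (fun n => INR (t n) / INR (r n)) 1) :
  exists n0 : nat, forall n, (n0 <= n)%nat ->
    forall (u : nat) (U : nat -> bool), (u < n)%nat ->
      (exists v, (v < n)%nat /\ U v = true) ->
      hit_prob n (G n) U u (t n) >= / 3 * cap n (G n) U (r n).
Proof.
destruct (Htlim (1/10)) as [N1 HN1]; [lra|].
destruct (Hrlim 20) as [N2 HN2].
exists (Nat.max 4 (Nat.max N1 N2)). intros n Hn u U Hu _.
assert (H2 : (2 <= n)%nat) by lia.
destruct (HG n H2) as [[hs _] _]. destruct (Htm n H2) as [Hm _].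
apply (core n (G n) U (tm n)); auto; try apply Hr.
specialize (HN1 n ltac:(lia)). specialize (HN2 n ltac:(lia)).
pose proof (Hr n) as hr. pose proof (Ht n) as ht.
assert (R0 : 0 < INR (r n)) by (apply lt_0_INR; lia).
assert (T1 : INR (t n) >= 9/10 * INR (r n)).
{ unfold Rdist in HN1. apply Rabs_def2 in HN1. destruct HN1 as [_ HN1].
  assert (INR (t n) = INR (t n) / INR (r n) * INR (r n)) by (field; lra). nra. }
assert (L : 1 < ln (INR n)).
{ rewrite <- ln_exp with 1. apply ln_increasing. apply exp_pos.
  pose proof exp_le_3. assert (4 <= INR n) by (replace 4 with (INR 4) by (simpl; ring); apply le_INR; lia). lra. }
assert (S1 : 20 * INR (tm n) <= INR (r n)).
{ destruct (tm n) eqn:E. simpl; lra.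
  assert (0 < INR (S n0)) by (apply lt_0_INR; lia).
  assert (0 < ln (INR n) * INR (S n0)) by nra.
  assert (INR (r n) = INR (r n) / (ln (INR n) * INR (S n0)) * (ln (INR n) * INR (S n0))) by (field; lra).
  nra. }
apply INR_le. rewrite !plus_INR, !mult_INR. simpl INR. lra.
Qed.
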